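(* Let $W$ be a graded CLSAS on $\mathcal{W}$, regarded as a $\mathcal{W}$-module via left multiplication. Then $W$ is not isomorphic to $A_\gamma$ for any $\gamma\in\mathbb{C}$.
   Context: $G$ is a free (additive) subgroup of $\mathbb{C}$ of rank $\nu>1$. The high rank Witt algebra $\mathcal{W}$ has basis $\{L_a\mid a\in G\}$ and bracket $[L_a,L_b]=(b-a)L_{a+b}$. A left-symmetric algebra is a complex vector space with bilinear product satisfying $(xy)z-x(yz)=(yx)z-y(xz)$; a compatible left-symmetric algebraic structure (CLSAS) on a Lie algebra $\mathfrak g$ is such a product on $\mathfrak g$ with $xy-yx=[x,y]$. A CLSAS on $\mathcal{W}$ is graded if $L_aL_b=f(a,b)L_{a+b}$ for some function $f:G\times G\to\mathbb{C}$. The $\mathcal{W}$-module $A_\gamma$ ($\gamma\in\mathbb{C}$) has basis $\{v_b\mid b\in G\}$ and action $L_av_b=(a+b)v_{a+b}$ if $b\neq0$, $L_av_0=a(\gamma+a)v_a$. *)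

(* Defs.v *)
(* The complex field C is modelled by an arbitrary
   numClosedFieldType. *)
From HB Require Import structures.
From mathcomp Require Import all_boot all_order all_algebra.
Set Implicit Arguments. Unset Strict Implicit. Unset Printing Implicit Defensive.
Import Order.TTheory GRing.Theory Num.Theory.
Local Open Scope ring_scope.

Section Defs.
Variable C : numClosedFieldType.

Definition inG (n : nat) (e : 'I_n -> C) (x : C) : Prop :=
  exists k : 'I_n -> int, x = \sum_(i < n) e i *~ k i.

Definition Zfree (n : nat) (e : 'I_n -> C) : Prop :=
  forall k : 'I_n -> int, \sum_(i < n) e i *~ k i = 0 -> forall i, k i = 0.

(* A graded CLSAS on W: L_a L_b = f(a,b) L_{a+b}, with
   L_a L_b - L_b L_a = (b - a) L_{a+b} and left-symmetry on basis elements. *)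
Definition graded_CLSAS (G : C -> Prop) (f : C -> C -> C) : Prop :=
  (forall a b, G a -> G b -> f a b - f b a = b - a) /\
  (forall a b c, G a -> G b -> G c ->
     f a b * f (a + b) c - f b c * f a (b + c)
     = f b a * f (b + a) c - f a c * f b (a + c)).

(* Vectors of a space with basis indexed by G: finitely supported coefficient
   functions C -> C vanishing outside G. *)
Definition fsupp (G : C -> Prop) (u : C -> C) : Prop :=
  (exists s : seq C, forall x, u x != 0 -> x \in s) /\
  (forall x, u x != 0 -> G x).

(* Action of L_a on a module with basis {w_b} and L_a w_b = rho a b w_{a+b}. *)
Definition shift_act (rho : C -> C -> C) (a : C) (u : C -> C) : C -> C :=
  fun x => rho a (x - a) * u (x - a).

Definition rhoA (gamma : C) (a b : C) : C :=
  if b == 0 then a * (gamma + a) else a + b.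

Definition module_iso (G : C -> Prop) (rho1 rho2 : C -> C -> C) : Prop :=
  exists phi : (C -> C) -> (C -> C),
    [/\ (forall u, fsupp G u -> fsupp G (phi u)),
        (forall (k : C) u v, fsupp G u -> fsupp G v ->
           phi (fun x => k * u x + v x) = (fun x => k * phi u x + phi v x)),
        (forall u v, fsupp G u -> fsupp G v -> phi u = phi v -> u = v),
        (forall w, fsupp G w -> exists2 u, fsupp G u & phi u = w) &
        (forall a u, G a -> fsupp G u ->
           phi (shift_act rho1 a u) = shift_act rho2 a (phi u))].
End Defs.

(* Main.v *)
Require Import Defs.
From HB Require Import structures.
From mathcomp Require Import all_boot all_order all_algebra.
From Stdlib Require Import FunctionalExtensionality.
Import Order.TTheory GRing.Theory Num.Theory.
Set Implicit Arguments.
Local Open Scope ring_scope.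

Lemma key (C : numClosedFieldType) (G : C -> Prop) (f rho2 : C -> C -> C)
  (phi : (C -> C) -> (C -> C)) :
  (forall c, G c -> exists a b, [/\ G a, G b, a + b = c & f a b != 0]) ->
  (forall (k : C) u v, fsupp G u -> fsupp G v ->
           phi (fun x => k * u x + v x) = (fun x => k * phi u x + phi v x)) ->
  (forall a u, G a -> fsupp G u ->
           phi (shift_act f a u) = shift_act rho2 a (phi u)) ->
  (forall a w, G a -> shift_act rho2 a w 0 = 0) ->
  forall (s : seq C) (u : C -> C), (forall x, u x != 0 -> x \in s) -> (forall x, u x != 0 -> G x) ->
  phi u 0 = 0.
Proof.
move=> HG Hlin Hsh Hr; elim=> [|c s IH] u Hs Hu.
  have fu : fsupp G u by split=> //; exists [::].
  have E : (fun x => 1 * u x + u x) = u.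
    apply: functional_extensionality => x.
    by case: (eqVneq (u x) 0) => [->|/Hs //]; rewrite mul1r addr0.
  have := Hlin 1 u u fu fu; rewrite E => /(congr1 (fun g => g 0)) /= H.
  move: H; rewrite mul1r -{1}[phi u 0]add0r => /addIr.
  by move=> <-.
pose u' := fun x => if x == c then 0 else u x.
have Hu's : forall x, u' x != 0 -> x \in s.
  move=> x; rewrite /u'; case: (eqVneq x c) => [_|nxc ux]; first by rewrite eqxx.
  by move: (Hs x ux); rewrite in_cons (negbTE nxc).
have Hu'G : forall x, u' x != 0 -> G x.
  by move=> x; rewrite /u'; case: (eqVneq x c) => [_|_]; [rewrite eqxx | apply: Hu].
case: (eqVneq (u c) 0) => [uc0|ucn0].
  have E : u' = u.
    apply: functional_extensionality => x; rewrite /u'.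
    by case: eqP => // ->.
  by rewrite -E; apply: IH.
have [a [b [Ga Gb Hab fab]]] := HG c (Hu c ucn0).
pose v := fun y => if y == b then u c / f a b else 0.
have fv : fsupp G v.
  split; first by exists [:: b] => y; rewrite /v; case: (eqVneq y b) => [->|_]; rewrite ?inE ?eqxx.
  by move=> y; rewrite /v; case: (eqVneq y b) => [->|_]; rewrite ?eqxx.
have fu' : fsupp G u' by split=> //; exists s.
have Eq : forall x, (x - a == b) = (x == c).
  by move=> x; rewrite subr_eq -Hab addrC.
have fsh : fsupp G (shift_act f a v).
  split.
    exists [:: c] => x; rewrite /shift_act /v Eq; case: (eqVneq x c) => [-> _|_]; rewrite ?inE ?eqxx //.
    by rewrite mulr0 eqxx.
  move=> x; rewrite /shift_act /v Eq; case: (eqVneq x c) => [-> _|_]; rewrite ?mulr0 ?eqxx //.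
  exact: Hu.
have E : (fun x => 1 * shift_act f a v x + u' x) = u.
  apply: functional_extensionality => x.
  rewrite /shift_act /v /u' Eq mul1r; case: eqP => [->|_].
    by rewrite addr0 -Hab addrC addKr mulrC divfK.
  by rewrite mulr0 add0r.
have := Hlin 1 _ _ fsh fu'; rewrite E => ->.
by rewrite Hsh // Hr // mulr0 add0r; apply: IH.
Qed.

Lemma inG0 (C : numClosedFieldType) (n : nat) (e : 'I_n -> C) : inG e 0.
Proof. by exists (fun _ => 0); rewrite big1 // => i _; rewrite mulr0z. Qed.

Lemma inGN (C : numClosedFieldType) (n : nat) (e : 'I_n -> C) x :
  inG e x -> inG e (- x).
Proof.
case=> k ->; exists (fun i => - k i); rewrite -sumrN.
by apply: eq_bigr => i _; rewrite mulrNz.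
Qed.

Theorem theorem3p3 (C : numClosedFieldType) (n : nat) (e : 'I_n -> C) :
  (1 < n)%N -> Zfree e ->
  forall f : C -> C -> C, graded_CLSAS (inG e) f ->
  forall gamma : C, ~ module_iso (inG e) f (rhoA gamma).
Proof.
move=> n1 Zf f [Hanti _] gamma [phi [_ Hlin _ Hsurj Hsh]].
have i0 : 'I_n by exists 0%N; apply: ltn_trans n1.
have Ge0 : inG e (e i0).
  exists (fun i => (i == i0)%:Z); rewrite (bigD1 i0) //= eqxx mulr1z big1 ?addr0 //.
  by move=> i /negbTE ->; rewrite mulr0z.
have e0n0 : e i0 != 0.
  apply/eqP => e0.
  have := Zf (fun i => (i == i0)%:Z).
  rewrite (bigD1 i0) //= eqxx mulr1z big1 ?addr0.
    by move=> /(_ e0 i0); rewrite eqxx.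
  by move=> i /negbTE ->; rewrite mulr0z.
have HG : forall c, inG e c -> exists a b,
    [/\ inG e a, inG e b, a + b = c & f a b != 0].
  move=> c Gc; case: (eqVneq c 0) => [->|cn0].
    have H := Hanti _ _ Ge0 (inGN Ge0).
    case: (eqVneq (f (e i0) (- e i0)) 0) => [h|h].
      exists (- e i0), (e i0); split; rewrite ?addNr //; first exact: inGN.
      apply/eqP => h'; move: H; rewrite h h' subr0 => /eqP.
      rewrite eq_sym -opprD oppr_eq0 -mulr2n mulrn_eq0 /= (negbTE e0n0) //.
    by exists (e i0), (- e i0); split; rewrite ?addrN //; apply: inGN.
  have H := Hanti _ _ (@inG0 _ _ e) Gc.
  case: (eqVneq (f 0 c) 0) => [h|h].
    exists c, 0; split; rewrite ?addr0 //; first exact: inG0.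
    apply/eqP => h'; move: H; rewrite h h' subr0 => /eqP; rewrite eq_sym subr0.
    by rewrite (negbTE cn0).
  by exists 0, c; split; rewrite ?add0r //; apply: inG0.
pose d := fun x : C => if x == 0 then 1 else 0 : C.
have fd : fsupp (inG e) d.
  split; first by exists [:: 0] => x; rewrite /d; case: (eqVneq x 0) => [->|_]; rewrite ?inE ?eqxx.
  by move=> x; rewrite /d; case: (eqVneq x 0) => [-> _|_]; rewrite ?eqxx //; apply: inG0.
have [u [[s Hs] Hu] Hpu] := Hsurj d fd.
have Hr : forall a w, inG e a -> shift_act (rhoA gamma) a w 0 = 0.
  move=> a w _; rewrite /shift_act /rhoA sub0r oppr_eq0.
  by case: eqP => [->|_]; rewrite ?mul0r // addrN mul0r.
have := @key _ _ f (rhoA gamma) phi HG Hlin Hsh Hr s u Hs Hu.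
rewrite Hpu /d eqxx; apply/eqP; exact: oner_neq0.
Qed.
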